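(* Let $a,a^{+}$ be boson operators with $aa^{+}-a^{+}a=1$, let $m\in\mathbb{N}$ and let $\lambda$ be a nonzero real number. For all integers $l,n\ge0$, \[ (m\,a^{+}a+1)_{l+n,\lambda}=\sum_{j=0}^{l}W_{m,\lambda}(l,j)\,m^{j}(a^{+})^{j}\,(m\,a^{+}a+1+mj-l\lambda)_{n,\lambda}\,a^{j}. \]
   Context: For an operator or number $X$ and real $\lambda\neq0$, $(X)_{0,\lambda}=1$ and $(X)_{n,\lambda}=X(X-\lambda)\cdots(X-(n-1)\lambda)$ for $n\ge1$ (scalars mean multiples of the identity). For $m\in\mathbb{N}$, the degenerate Whitney numbers of the second kind $W_{m,\lambda}(n,k)$ are defined by $(mx+1)_{n,\lambda}=\sum_{k=0}^{n}W_{m,\lambda}(n,k)m^{k}(x)_k$ for $n\ge0$, where $(x)_k=x(x-1)\cdots(x-k+1)$. *)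

(* Defs.v *)
From HB Require Import structures.
From mathcomp Require Import all_boot all_order all_algebra.
From mathcomp Require Import reals.
Set Implicit Arguments. Unset Strict Implicit. Unset Printing Implicit Defensive.
Import Order.TTheory GRing.Theory Num.Theory.
Local Open Scope ring_scope.

Definition dfall {R : pzRingType} {A : lalgType R} (X : A) (lam : R) (n : nat) : A :=
  \prod_(i < n) (X - (i%:R * lam)%:A).

Definition ffall {R : pzRingType} (x : R) (k : nat) : R :=
  \prod_(i < k) (x - i%:R).

(* Main.v *)
Require Import Defs.
From HB Require Import structures.
From mathcomp Require Import all_boot all_order all_algebra.
From mathcomp Require Import reals.
Import Order.TTheory GRing.Theory Num.Theory.
Local Open Scope ring_scope.

Lemma dfall_ev (R : realType) (A : algType R) (N : A) (p : {poly R}) lam n :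
  horner_alg N (dfall p lam n) = dfall (horner_alg N p) lam n.
Proof.
rewrite /dfall rmorph_prod; apply: eq_bigr => i _.
by rewrite rmorphB /= alg_polyC horner_algC.
Qed.

Lemma ev_comm (R : realType) (A : algType R) (N : A) (p q : {poly R}) :
  horner_alg N p * horner_alg N q = horner_alg N q * horner_alg N p.
Proof. by rewrite -!rmorphM /= mulrC. Qed.

Lemma poly_ext (R : realType) (p q : {poly R}) :
  (forall x, p.[x] = q.[x]) -> p = q.
Proof.
move=> H; apply/eqP; rewrite -subr_eq0; apply/eqP.
apply: (@roots_geq_poly_eq0 _ _ [seq i%:R | i <- iota 0 (size (p - q))]).
- by apply/allP => x _; rewrite /root hornerD hornerN H subrr.
- rewrite map_inj_uniq ?iota_uniq // => i j /eqP; rewrite eqr_nat => /eqP //.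
- by rewrite size_map size_iota.
Qed.

Lemma ffall_ev (R : realType) (A : algType R) (a ad : A) j :
  a * ad - ad * a = 1 ->
  ad ^+ j * a ^+ j = horner_alg (ad * a) (ffall 'X j).
Proof.
move=> H.
have Hc : a * ad = ad * a + 1 by rewrite -H addrC subrK.
have Na : forall k, (ad * a) * a ^+ k = a ^+ k * (ad * a - k%:R).
  elim=> [|k IH]; first by rewrite expr0 mul1r mulr1 subr0.
  have E : ad * a * a = a * (ad * a - 1).
    by rewrite mulrBr mulr1 mulrA Hc mulrDl mul1r addrK.
  rewrite exprS mulrA E -mulrA mulrBl mul1r IH.
  by rewrite -mulrA -[X in _ - X]mulr1 -mulrBr -natr1 opprD addrA.
elim: j => [|j IH]; first by rewrite !expr0 mulr1 /ffall big_ord0 rmorph1.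
rewrite /ffall big_ord_recr rmorphM /= -/(ffall _ _) -IH.
rewrite rmorphB /= horner_algX rmorph_nat.
by rewrite -mulrA -Na exprSr exprS !mulrA.
Qed.

Lemma dfall_split (R : realType) (A : algType R) (X : A) lam l n :
  dfall X lam (l + n) = dfall X lam l * dfall (X - (l%:R * lam)%:A) lam n.
Proof.
rewrite /dfall big_split_ord /=; congr (_ * _); apply: eq_bigr => i _.
by rewrite natrD mulrDl scalerDl opprD addrA.
Qed.

Lemma dfall_comm (R : realType) (A : algType R) (X X' b : A) lam n :
  X * b = b * X' -> dfall X lam n * b = b * dfall X' lam n.
Proof.
move=> H; elim: n => [|n IH]; first by rewrite /dfall !big_ord0 mul1r mulr1.
rewrite /dfall !big_ord_recr /= -/(dfall _ _ _) -/(dfall _ _ _).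
rewrite -mulrA mulrBl H mulr_algl -mulr_algr -mulrBr mulrA IH -mulrA //.
Qed.

Lemma horner_dfall (R : realType) (p : {poly R}) lam n x :
  (dfall p lam n).[x] = @dfall R R^o p.[x] lam n.
Proof.
rewrite /dfall horner_prod; apply: eq_bigr => i _.
by rewrite hornerD hornerN alg_polyC hornerC [in RHS]/GRing.scale /= mulr1.
Qed.

Lemma shiftN (R : realType) (A : algType R) (a ad : A) (m : nat) (s : R) :
  a * ad - ad * a = 1 ->
  (m%:R * (ad * a) + s%:A) * ad = ad * (m%:R * (ad * a) + (s + m%:R)%:A).
Proof.
move=> H.
have Hc : a * ad = ad * a + 1 by rewrite -H addrC subrK.
rewrite mulrDl mulr_algl -mulr_algr -mulrA -(mulrA ad) Hc mulrDr mulr1 mulrA.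
rewrite [RHS]mulrDr scalerDl scaler_nat [ad * (_ + _)]mulrDr mulr_natr !mulr_natl mulrnDl -mulrnAr.
by rewrite mulrA -!addrA mulrnAr [ad *+ m + _]addrC.
Qed.

Theorem mainTheorem6 (R : realType) (A : algType R) (a ad : A) (m : nat)
  (lam : R) (W : nat -> nat -> R) :
  lam != 0 ->
  a * ad - ad * a = 1 ->
  (forall (n : nat) (x : R),
      @dfall R R^o (m%:R * x + 1) lam n
      = \sum_(k < n.+1) W n k * m%:R ^+ k * ffall x k) ->
  forall l n : nat,
    dfall (m%:R * (ad * a) + 1) lam (l + n)
    = \sum_(j < l.+1)
        (W l j * m%:R ^+ j) *:
          (ad ^+ j
           * dfall (m%:R * (ad * a) + 1 + (m * j)%:R - (l%:R * lam)%:A) lam n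
           * a ^+ j).
Proof.
move=> _ H HW l n.
set N := ad * a.
pose ev := horner_alg N.
pose Pp := dfall (m%:R * 'X + 1 : {poly R}) lam l.
pose Q := \sum_(k < l.+1) (W l k * m%:R ^+ k) *: ffall ('X : {poly R}) k.
have HPQ : Pp = Q.
  apply: poly_ext => x; rewrite horner_dfall /Q horner_sum.
  rewrite -polyC_natr !hornerE HW; apply: eq_bigr => k _.
  rewrite hornerZ /ffall horner_prod; congr (_ * _); apply: eq_bigr => i _.
  by rewrite -polyC_natr !hornerE.
pose P0 := (m%:R * 'X + 1 - (l%:R * lam)%:A : {poly R}).
have EX : ev (m%:R * 'X + 1) = m%:R * N + 1.
  by rewrite /ev rmorphD rmorphM rmorph1 rmorph_nat /= horner_algX.
have EY : ev P0 = m%:R * N + 1 - (l%:R * lam)%:A.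
  by rewrite /ev /P0 rmorphB /= -/ev EX /ev alg_polyC horner_algC.
have Hterm : forall j : nat,
   ad ^+ j * dfall (m%:R * N + 1 + (m * j)%:R - (l%:R * lam)%:A) lam n
   = dfall (m%:R * N + 1 - (l%:R * lam)%:A) lam n * ad ^+ j.
  elim=> [|j IH].
    by rewrite expr0 mul1r mulr1 muln0 addr0.
  have Ej : forall k : nat, m%:R * N + 1 + (m * k)%:R - (l%:R * lam)%:A
                = m%:R * N + (1 + (m * k)%:R - l%:R * lam)%:A.
    move=> k; rewrite -addrA -addrA; congr (_ + _).
    by rewrite scalerBl scalerDl scale1r scaler_nat addrA.
  rewrite exprSr [RHS]mulrA -IH -!mulrA; congr (_ * _).
  symmetry; apply: dfall_comm.
  rewrite !Ej (shiftN _ _ _ _ _ _ H); congr (_ * (_ + _%:A)).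
  by rewrite mulnSr natrD addrAC addrA.
transitivity (dfall (m%:R * N + 1 - (l%:R * lam)%:A) lam n * ev Q).
  rewrite -HPQ /Pp dfall_split -EY -EX -!dfall_ev.
  exact: ev_comm.
have hZ : forall (c : R) (p : {poly R}), ev (c *: p) = c *: ev p.
  by move=> c p; rewrite /ev -mul_polyC rmorphM /= horner_algC mulr_algl.
have hQ : ev Q = \sum_(k < l.+1) (W l k * m%:R ^+ k) *: ev (ffall 'X k).
  rewrite /Q; elim/big_rec2: _ => [|k y p _ <-]; first by rewrite /ev rmorph0.
  by rewrite -hZ /ev rmorphD.
rewrite hQ mulr_sumr; apply: eq_bigr => j _.
rewrite -scalerAr; congr (_ *: _).
by rewrite Hterm -mulrA ffall_ev.
Qed.
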